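(* Let $N$ be a perfect planar network in an annulus whose edge weights are given by flag coordinates as $w_e=x_v^ix_u^j$, and let $\{\cdot,\cdot\}_N$ be the Poisson bracket on the space of edge weights obtained as the pushforward of the universal bracket with parameters $\alpha_{ij},\beta_{ij}$. Then the gauge-invariant functions on the space of edge weights form a Poisson subalgebra, so that $\{\cdot,\cdot\}_N$ pushes forward under the projection $y:\mathcal E_N\to\mathcal F_N$ to a Poisson bracket $\{\cdot,\cdot\}_{\mathcal F_N}$ on the space $\mathcal F_N$ of face and trail weights; moreover, $\{\cdot,\cdot\}_{\mathcal F_N}$ depends on the six parameters $\alpha_{ij}$ and the six parameters $\beta_{ij}$ only through \[ \alpha=\alpha_{23}+\alpha_{13}-\alpha_{12},\qquad \beta=\beta_{23}+\beta_{13}-\beta_{12}, \] and is linear in $(\alpha,\beta)$.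
   Context: A perfect planar network in an annulus: a directed graph $G=(V,E)$ embedded in an annulus, with boundary vertices on the two boundary circles, each a source (one outgoing edge, no incoming) or a sink (one incoming edge, no outgoing); internal vertices have degree $3$ and are white (exactly one incoming edge) or black (exactly one outgoing edge); a cut and edge weights $w_e\in\mathbb R\setminus0$ as usual. A flag is a pair $(v,e)$ with $v$ an endpoint of $e$. To each internal vertex $v$ assign coordinates $x_v^1,x_v^2,x_v^3\in\mathbb R\setminus0$ labeling the three flags at $v$: $x_v^1$ labels the flag of the edge that is unique in its direction at $v$ (the incoming edge if $v$ is white, the outgoing edge if $v$ is black), and the flags labeled $x_v^1,x_v^2,x_v^3$ follow each other in clockwise order around $v$. Each boundary vertex $b_j$ gets one coordinate $x_j^1$ labeling its unique flag. Edge weights are $w_e=x_v^ix_u^j$, where $x_v^i,x_u^j$ label the two flags of $e$. The universal bracket is $\{x_v^i,x_v^j\}=\alpha_{ij}x_v^ix_v^j$ at white $v$, $\{x_v^i,x_v^j\}=\beta_{ij}x_v^ix_v^j$ at black $v$ ($i\ne j$, antisymmetric constants), all other brackets of coordinates zero; $\{\cdot,\cdot\}_N$ is its pushforward to the space $\mathcal E_N=(\mathbb R\setminus0)^{|E|}$ of edge weights. Gauge group: $\mathcal G=\mathrm{Hom}(\mathbb Z^{V_0},\mathbb R^* )$, $V_0$ the internal vertices, i.e. functions $\varphi:V\to\mathbb R^*$ with $\varphi(b)=1$ at boundary vertices, acting by $w_e\mapsto w_e\varphi(v)/\varphi(u)$ for $e=(u,v)$. $\mathcal F_N=\mathcal E_N/\mathcal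 G$ and $y:\mathcal E_N\to\mathcal F_N$ is the projection. The functions on $\mathcal F_N$ are generated by face weights $y_f=\prod_{e\in\partial f}w_e^{\pm1}$ (exponent $+1$ if the direction of $e$ agrees with the counterclockwise orientation of $\partial f$, $-1$ otherwise; $f$ a connected component of the complement of $G$ in the annulus) and, if some trail connects the two boundary circles, by the weight $y_t=\prod w(v_i,v_{i+1})$ of such a trail $t=(v_1,\dots,v_{k+1})$ (a sequence of vertices, consecutive ones joined by an edge in either direction, with boundary endpoints), where $w(v_i,v_{i+1})=w_e$ if $e=(v_i,v_{i+1})\in E$ and $w_e^{-1}$ if $e=(v_{i+1},v_i)\in E$. *)

(* Defs.v *)
From HB Require Import structures.
From mathcomp Require Import all_boot all_order all_algebra.
Set Implicit Arguments. Unset Strict Implicit. Unset Printing Implicit Defensive.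
Import Order.TTheory GRing.Theory Num.Theory.
Local Open Scope ring_scope.

Record network := Network {
  nV : finType;
  nE : finType;
  etail : nE -> nV;
  ehead : nE -> nV;
  isb : nV -> bool;
  white : nV -> bool;           (* colour of an internal vertex (true = white) *)
  circ : nV -> bool;            (* which boundary circle a boundary vertex lies on *)
  rot : (nE * bool)%type -> (nE * bool)%type;
      (* half-edge (= flag) (e,false) is the tail end, (e,true) the head end;
         rot h is the next flag clockwise around the vertex of h *)
  bnext : nV -> nV;
      (* next boundary vertex along the boundary circle, reached from the
         clockwise side of the boundary edge *)
  nF : finType;
  face : (nE * bool)%type -> nF
      (* side (e,true) = left side of e, (e,false) = right side of e;
         face s = the face containing that side *)
}.

Notation hedge N := (nE N * bool)%type.

Definition hv (N : network) (h : hedge N) : nV N :=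
  if h.2 then ehead h.1 else etail h.1.

(* the side of the edge of h lying clockwise (resp. counterclockwise) from h
   around hv h: for an outgoing edge the clockwise side is its right side,
   for an incoming edge its left side. *)
Definition cw_side (N : network) (h : hedge N) : hedge N := (h.1, h.2).
Definition ccw_side (N : network) (h : hedge N) : hedge N := (h.1, ~~ h.2).

Definition perfect_annular (N : network) : Prop :=
  (forall v : nV N, isb v -> #|[pred h : hedge N | hv h == v]| = 1%N) /\
  (forall v : nV N, ~~ isb v ->
     #|[pred h : hedge N | hv h == v]| = 3%N /\
     #|[pred h : hedge N | (hv h == v) && h.2]| = (if white v then 1 else 2)%N) /\
  (forall h : hedge N, ~~ isb (hv h) ->
     [/\ hv (rot h) = hv h, rot h != h, rot (rot h) != h
       & rot (rot (rot h)) = h]) /\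
  (* faces: the two sides meeting at a corner of an internal vertex lie in
     the same face *)
  (forall h : hedge N, ~~ isb (hv h) ->
     face (cw_side h) = face (ccw_side (rot h))) /\
  (forall b : nV N, isb b -> isb (bnext b) /\ circ (bnext b) = circ b) /\
  (forall b b' : nV N, isb b -> isb b' -> bnext b = bnext b' -> b = b') /\
  (forall b b' : nV N, isb b -> isb b' -> circ b = circ b' ->
     exists k, iter k (@bnext N) b = b') /\
  (* sides joined along a boundary arc lie in the same face *)
  (forall h h' : hedge N, isb (hv h) -> hv h' = bnext (hv h) ->
     face (cw_side h) = face (ccw_side h')) /\
  (forall f : nF N, exists s, face s = f).

Definition i0 : 'I_3 := @Ordinal 3 0 isT.
Definition i1 : 'I_3 := @Ordinal 3 1 isT.
Definition i2 : 'I_3 := @Ordinal 3 2 isT.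

(* the flag of the edge unique in its direction: incoming at white,
   outgoing at black *)
Definition special (N : network) (h : hedge N) : bool := h.2 == white (hv h).

(* label k (as 'I_3, i.e. 0,1,2 for x^1,x^2,x^3): x^1 on the special flag,
   then clockwise x^2, x^3 *)
Definition lab (N : network) (h : hedge N) : 'I_3 :=
  if special h then i0 else if special (rot (rot h)) then i1 else i2.

Definition antisym (R : realFieldType) (al : 'I_3 -> 'I_3 -> R) : Prop :=
  forall i j, al i j = - al j i.

(* {x_h, x_h'} = univ_br al be h h' * x_h * x_h' *)
Definition univ_br (R : realFieldType) (N : network) (al be : 'I_3 -> 'I_3 -> R)
  (h h' : hedge N) : R :=
  if [&& hv h == hv h', ~~ isb (hv h) & h != h']
  then (if white (hv h) then al else be) (lab h) (lab h')
  else 0.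

(* log-canonical bracket of Laurent monomials in the flag coordinates:
   {x^m, x^n} = mon_br m n * x^m * x^n *)
Definition mon_br (R : realFieldType) (N : network) (al be : 'I_3 -> 'I_3 -> R)
  (m n : hedge N -> int) : R :=
  \sum_(h : hedge N) \sum_(h' : hedge N) (m h * n h')%:~R * univ_br al be h h'.

(* edge weight w_e = product of the two flag coordinates of e, so the edge
   monomial w^a equals the flag monomial x^(pull a) *)
Definition pull (N : network) (a : nE N -> int) : hedge N -> int := fun h => a h.1.

(* pushforward bracket {.,.}_N on edge-weight monomials:
   {w^a, w^b}_N = brN a b * w^a * w^b *)
Definition brN (R : realFieldType) (N : network) (al be : 'I_3 -> 'I_3 -> R)
  (a b : nE N -> int) : R := mon_br al be (pull a) (pull b).

Definition wmon (R : realFieldType) (N : network) (a : nE N -> int)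
  (w : nE N -> R) : R := \prod_(e : nE N) w e ^ a e.

Definition gauge (R : realFieldType) (N : network) (phi : nV N -> R)
  (w : nE N -> R) : nE N -> R :=
  fun e => w e * phi (ehead e) / phi (etail e).

Definition gauge_inv (R : realFieldType) (N : network)
  (Fn : (nE N -> R) -> R) : Prop :=
  forall (phi : nV N -> R) (w : nE N -> R),
    (forall v : nV N, phi v != 0) -> (forall v : nV N, isb v -> phi v = 1) ->
    (forall e, w e != 0) -> Fn (gauge phi w) = Fn w.

(* y_f = prod_e w_e^(fexp f e): +1 if f is on the left of e (direction agrees
   with the counterclockwise orientation of the boundary of f), -1 if on the
   right (both contributions if f is on both sides) *)
Definition fexp (N : network) (f : nF N) : nE N -> int :=
  fun e => ((face (e, true) == f) : nat)%:Z - ((face (e, false) == f) : nat)%:Z.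

(* a step of a trail: (e, true) traverses e along its direction, (e, false)
   against it *)
Definition stp_src (N : network) (s : hedge N) : nV N :=
  if s.2 then etail s.1 else ehead s.1.
Definition stp_dst (N : network) (s : hedge N) : nV N :=
  if s.2 then ehead s.1 else etail s.1.

Definition connecting_trail (N : network) (t : seq (hedge N)) : Prop :=
  match t with
  | [::] => False
  | s0 :: t' =>
      [/\ path (fun a b => stp_dst a == stp_src b) s0 t',
          isb (stp_src s0), isb (stp_dst (last s0 t'))
        & circ (stp_src s0) != circ (stp_dst (last s0 t'))]
  end.

Definition texp (N : network) (t : seq (hedge N)) : nE N -> int :=
  fun e => \sum_(s <- t | s.1 == e) (if s.2 then 1 else -1).

(* generators of the functions on F_N: face weights and connecting trail
   weights *)
Definition Fgen (N : network) (p : nE N -> int) : Prop :=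
  (exists f : nF N, p = fexp f) \/
  (exists t, connecting_trail t /\ p = texp t).

Definition agg (R : realFieldType) (al : 'I_3 -> 'I_3 -> R) : R :=
  al i1 i2 + al i0 i2 - al i0 i1.

(* Main.v *)
Require Import Defs.
From HB Require Import structures.
From mathcomp Require Import all_boot all_order all_algebra.
From Stdlib Require Import Ring.
Import Order.TTheory GRing.Theory Num.Theory.
Notation rotN := Defs.rot.
Set Implicit Arguments. Unset Strict Implicit. Unset Printing Implicit Defensive.
Local Open Scope ring_scope.

Section AbsRing.
Variable (T : Type) (zero one : T) (add mul sub : T -> T -> T) (opp : T -> T).
Hypothesis rt : ring_theory zero one add mul sub opp eq.
Add Ring aR : rt.

Lemma absK1 (x y u z c01 c02 c12 : T) :
  add (add (mul (mul (add x y) (add u z)) zero)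
           (add (mul (mul (add x y) u) c01) (mul (mul (add x y) z) c02)))
      (add (add (mul (mul x (add u z)) (opp c01))
                (add (mul (mul x u) zero) (mul (mul x z) c12)))
           (add (mul (mul y (add u z)) (opp c02))
                (add (mul (mul y u) (opp c12)) (mul (mul y z) zero))))
  = mul (sub (mul x z) (mul y u)) (sub (add c12 c02) c01).
Proof. ring. Qed.

Lemma absK2 (a b c : T) :
  add (sub a b) (add (sub c a) (sub b c)) = zero.
Proof. ring. Qed.

Lemma absK3 (d s l : T) : add (sub d s) (sub l d) = sub l s.
Proof. ring. Qed.

Lemma absK4w (p0 p1 p2 : T) :
  p0 = add (add p1 p2) (add (mul p0 one) (add (mul p1 (opp one)) (mul p2 (opp one)))).
Proof. ring. Qed.

Lemma absK4b (p0 p1 p2 : T) :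
  p0 = sub (add p1 p2) (add (mul p0 (opp one)) (add (mul p1 one) (mul p2 one))).
Proof. ring. Qed.
End AbsRing.

Lemma mc_rt (R : comNzRingType) : @ring_theory R 0 1 +%R *%R (fun x y => x - y) -%R eq.
Proof.
split=> //=; [exact: add0r|exact: addrC|exact: addrA|exact: mul1r|exact: mulrC|exact: mulrA|exact: mulrDl|exact: subrr].
Qed.

Lemma sum3 (V : nmodType) (T : finType) (P : pred T) (x y z : T) (G : T -> V) :
  #|P| = 3%N -> P x -> P y -> P z -> x != y -> x != z -> y != z ->
  \sum_(h | P h) G h = G x + (G y + G z).
Proof.
move=> cP Px Py Pz xy xz yz.
rewrite (bigD1 x) //= (bigD1 y) /=; last by rewrite Py eq_sym xy.
rewrite (bigD1 z) /=; last by rewrite Pz (eq_sym z) xz (eq_sym z) yz.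
rewrite big_pred0 ?addr0 //.
move=> i; apply/negbTE/negP => /andP[/andP[/andP[Pi ix] iy] iz].
have mP : forall w, P w -> w \in P by [].
have : (4 <= #|P|)%N.
  rewrite (cardD1 x) (mP _ Px) (cardD1 y) !inE (mP _ Py) (eq_sym y) xy.
  rewrite (cardD1 z) !inE (mP _ Pz) (eq_sym z x) xz (eq_sym z y) yz.
  rewrite (cardD1 i) !inE (mP _ Pi) ix iy iz.
  by [].
by rewrite cP.
Qed.

Definition stepv (N : network) (s : hedge N) (v : nV N) : int :=
  ((stp_dst s == v) : nat)%:Z - ((stp_src s == v) : nat)%:Z.

Definition sg (N : network) (h : hedge N) : int := if h.2 then 1 else -1.
Definition fdiv (N : network) (p : nE N -> int) (v : nV N) : int :=
  \sum_(h : hedge N | hv h == v) p h.1 * sg h.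

Lemma fdiv_cons (N : network) (s : hedge N) (t : seq (hedge N)) (v : nV N) :
  fdiv (texp (s :: t)) v = stepv s v + fdiv (texp t) v.
Proof.
rewrite /fdiv.
have -> : \sum_(h : hedge N | hv h == v) texp (s :: t) h.1 * sg h =
  \sum_(h : hedge N | hv h == v) ((if s.1 == h.1 then (if s.2 then 1 else -1) else 0) * sg h
                                 + texp t h.1 * sg h).
  apply: eq_bigr => h _; rewrite /texp big_cons.
  by case: (s.1 == h.1); rewrite ?mulrDl ?mul0r ?add0r.
rewrite big_split /=; congr (_ + _).
rewrite big_mkcond /=.
rewrite (bigD1 (s.1, true)) //= (bigD1 (s.1, false)) /=; last by rewrite xpair_eqE eqxx.
set B := \big[_/_]_(i <- _ | _) _.
have -> : B = 0.
  apply: big1; case=> e b /andP[] /=; rewrite !xpair_eqE => n1 n2.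
  case: ifP => // _.
  suff -> : (s.1 == e) = false by rewrite mul0r.
  apply/negbTE/negP => /eqP se; move: n1 n2; rewrite se eqxx /=.
  by case: b.
rewrite addr0.
case: s {B} => e b /=; rewrite eqxx /hv /sg /stepv /stp_dst /stp_src /=.
by case: b; case: (ehead e == v); case: (etail e == v).
Qed.

Lemma fdiv_path (N : network) (v : nV N) (t : seq (hedge N)) (s0 : hedge N) :
  path (fun a b => stp_dst a == stp_src b) s0 t ->
  fdiv (texp (s0 :: t)) v =
  ((stp_dst (last s0 t) == v) : nat)%:Z - ((stp_src s0 == v) : nat)%:Z.
Proof.
elim: t s0 => [|s1 t IH] s0 /=.
  move=> _; rewrite fdiv_cons /stepv.
  suff -> : fdiv (texp [::]) v = 0 by rewrite addr0.
  by rewrite /fdiv big1 // => h _; rewrite /texp big_nil mul0r.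
case/andP => /eqP e01 pt.
rewrite fdiv_cons IH // /stepv -e01.
exact: (@absK3 _ _ _ _ _ _ _ (mc_rt int)).
Qed.

Section Net.
Variable N : network.
Hypothesis HN : perfect_annular N.

Lemma special_ex (v : nV N) : ~~ isb v ->
  exists s0 : hedge N, [/\ hv s0 = v, special s0 &
     forall h, hv h = v -> special h -> h = s0].
Proof.
move=> nb.
case: HN => _ [Hint _].
case: (Hint v nb) => c3 cw.
have c1 : #|[pred h : hedge N | (hv h == v) && special h]| = 1%N.
  have := cardID [pred h : hedge N | h.2] [pred h : hedge N | hv h == v].
  rewrite c3.
  case wv: (white v) cw => cw.
  - have -> : #|[pred h : hedge N | (hv h == v) && special h]| =
              #|[pred h : hedge N | (hv h == v) && h.2]|.
      apply: eq_card => h; rewrite !inE /special.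
      by case hh: (hv h == v); rewrite ?andbF //= ?(eqP hh) wv; case: (h.2).
    by rewrite cw.
  - have -> : #|[pred h : hedge N | (hv h == v) && special h]| =
              #|[predD [pred h : hedge N | hv h == v] & [pred h : hedge N | h.2]]|.
      apply: eq_card => h; rewrite !inE /special.
      by case hh: (hv h == v); rewrite ?andbF //= ?(eqP hh) wv; case: (h.2).
    have -> : #|[predI [pred h : hedge N | hv h == v] & [pred h : hedge N | h.2]]| =
              #|[pred h : hedge N | (hv h == v) && h.2]|.
      by apply: eq_card => h; rewrite !inE.
    by rewrite cw => /eqP; rewrite -[3%N]/(2 + 1)%N eqn_add2l => /eqP.
case/eqP/card1P: c1 => s0 Hs0.
have : s0 \in [pred h : hedge N | (hv h == v) && special h] by rewrite Hs0 inE.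
rewrite inE => /andP[/eqP hs0 ss0].
exists s0; split=> // h hh sh.
have : h \in [pred h : hedge N | (hv h == v) && special h] by rewrite inE hh eqxx.
by rewrite Hs0 inE => /eqP.
Qed.

Lemma flags3 (v : nV N) (s0 : hedge N) : ~~ isb v -> hv s0 = v -> special s0 ->
  (forall h, hv h = v -> special h -> h = s0) ->
  let s1 := rotN s0 in let s2 := rotN (rotN s0) in
  [/\ [/\ hv s1 = v, hv s2 = v, s0 != s1, s0 != s2 & s1 != s2],
      [/\ lab s0 = i0, lab s1 = i1 & lab s2 = i2],
      [/\ s0.2 = white v, s1.2 = ~~ white v & s2.2 = ~~ white v],
      rotN s2 = s0 &
      forall V : nmodType, forall G : hedge N -> V,
        \sum_(h | hv h == v) G h = G s0 + (G s1 + G s2)].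
Proof.
move=> nb hs0 ss0 uniq s1 s2.
case: HN => _ [Hint [Hrot _]].
have nb0 : ~~ isb (hv s0) by rewrite hs0.
case: (Hrot s0 nb0) => hs1 n10 n20 r3.
have hs1' : hv s1 = v by rewrite /s1 hs1.
have nb1 : ~~ isb (hv s1) by rewrite hs1'.
case: (Hrot s1 nb1) => hs2 _ _ _.
have hs2' : hv s2 = v by rewrite /s2 hs2.
have r2 : rotN s2 = s0 by exact: r3.
have n12 : s1 != s2.
  apply/eqP => e12.
  have : rotN s1 = s1 by rewrite -/s2 -e12.
  move=> fx.
  have : rotN s2 = s1 by rewrite /s2 fx fx.
  rewrite r2 => e01; move: n10; by rewrite -/s1 e01 eqxx.
have sp1 : special s1 = false.
  apply/negbTE/negP => sp; move: n10; by rewrite -/s1 (uniq s1 hs1' sp) eqxx.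
have sp2 : special s2 = false.
  apply/negbTE/negP => sp; move: n20; by rewrite -/s2 (uniq s2 hs2' sp) eqxx.
have rr1 : rotN (rotN s1) = s0 by exact: r3.
have rr2 : rotN (rotN s2) = s1 by rewrite r2.
split.
- split=> //; first by rewrite eq_sym.
  by rewrite eq_sym.
- by rewrite /lab ss0 sp1 sp2 rr1 ss0 -/s1 sp1.
- move: ss0 sp1 sp2; rewrite /special hs0 hs1' hs2'.
  by case: (s0.2); case: (s1.2); case: (s2.2); case: (white v).
- exact: r2.
- move=> V G.
  have [c3 _] := Hint v nb.
  apply: (sum3 (P := fun h : hedge N => hv h == v)).
  + by rewrite -c3; apply: eq_card => h; rewrite !inE.
  + by rewrite hs0.
  + by rewrite hs1'.
  + by rewrite hs2'.
  + by rewrite eq_sym.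
  + by rewrite eq_sym.
  + exact: n12.
Qed.


Lemma fexp_div (f : nF N) (v : nV N) : ~~ isb v -> fdiv (fexp f) v = 0.
Proof.
move=> nb.
have [s0 [hs0 ss0 un]] := special_ex nb.
have [[h1 h2 _ _ _] _ _ r2 S] := flags3 nb hs0 ss0 un.
case: HN => _ [_ [_ [Hface _]]].
rewrite /fdiv S.
have E : forall h : hedge N, fexp f h.1 * sg h =
   ((face (cw_side h) == f) : nat)%:Z - ((face (ccw_side h) == f) : nat)%:Z.
  by case=> e []; rewrite /fexp /sg /cw_side /ccw_side /= ?mulr1 ?mulrN1 ?opprB.
rewrite !E.
rewrite (Hface s0); last by rewrite hs0.
rewrite (Hface (rotN s0)); last by rewrite h1.
rewrite (Hface (rotN (rotN s0))); last by rewrite h2.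
rewrite r2.
exact: (@absK2 _ _ _ _ _ _ _ (mc_rt int)).
Qed.


Lemma texp_div (t : seq (hedge N)) (v : nV N) : ~~ isb v -> connecting_trail t ->
  fdiv (texp t) v = 0.
Proof.
move=> nb; case: t => [|s0 t] //= [pt b1 b2 _].
rewrite fdiv_path //.
have -> : (stp_dst (last s0 t) == v) = false.
  by apply/negbTE/negP => /eqP e; move: b2; rewrite e (negbTE nb).
have -> : (stp_src s0 == v) = false.
  by apply/negbTE/negP => /eqP e; move: b1; rewrite e (negbTE nb).
by [].
Qed.

Lemma Fgen_div (p : nE N -> int) (v : nV N) : Fgen p -> ~~ isb v -> fdiv p v = 0.
Proof.
case=> [[f ->]|[t [ct ->]]] nb; [exact: fexp_div | exact: texp_div].
Qed.

Definition Dv (a b : nE N -> int) (v : nV N) : int :=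
  if [pick h | (hv h == v) && special h] is Some s0
  then a (rotN s0).1 * b (rotN (rotN s0)).1 - a (rotN (rotN s0)).1 * b (rotN s0).1
  else 0.

Lemma div_rel (p : nE N -> int) (v : nV N) (s0 : hedge N) :
  ~~ isb v -> hv s0 = v -> special s0 ->
  (forall h, hv h = v -> special h -> h = s0) ->
  fdiv p v = 0 -> p s0.1 = p (rotN s0).1 + p (rotN (rotN s0)).1.
Proof.
move=> nb hs0 ss0 un.
have [_ _ [e0 e1 e2] _ S] := flags3 nb hs0 ss0 un.
rewrite /fdiv S /sg e0 e1 e2; case: (white v) => /= H0.
  apply: (etrans (@absK4w _ _ _ _ _ _ _ (mc_rt int) (p s0.1) (p (rotN s0).1) (p (rotN (rotN s0)).1))).
  by rewrite H0 addr0.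
apply: (etrans (@absK4b _ _ _ _ _ _ _ (mc_rt int) (p s0.1) (p (rotN s0).1) (p (rotN (rotN s0)).1))).
by rewrite H0 subr0.
Qed.

Lemma inner_restrict (R : realFieldType) (al be : 'I_3 -> 'I_3 -> R) (a b : nE N -> int)
  (v : nV N) (h : hedge N) : hv h == v ->
  \sum_(h' : hedge N) (a h.1 * b h'.1)%:~R * univ_br al be h h' =
  \sum_(h' : hedge N | hv h' == v) (a h.1 * b h'.1)%:~R * univ_br al be h h'.
Proof.
move=> /eqP hh; rewrite [RHS]big_mkcond; apply: eq_bigr => h' _.
case: ifP => // /negbT hh'.
by rewrite /univ_br hh eq_sym (negbTE hh') /= mulr0.
Qed.

Lemma brN_formula (R : realFieldType) (al be : 'I_3 -> 'I_3 -> R) (a b : nE N -> int) :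
  antisym al -> antisym be ->
  (forall v, ~~ isb v -> fdiv a v = 0) -> (forall v, ~~ isb v -> fdiv b v = 0) ->
  brN al be a b =
  \sum_(v : nV N) (if isb v then 0 else (Dv a b v)%:~R * agg (if white v then al else be)).
Proof.
move=> Aal Abe Da Db.
rewrite /brN /mon_br /pull.
rewrite (partition_big (@hv N) xpredT) //=.
apply: eq_bigr => v _.
case: ifP => bv.
  apply: big1 => h /eqP hh; apply: big1 => h' _.
  by rewrite /univ_br hh bv /= andbF mulr0.
have nb : ~~ isb v by rewrite bv.
have [s0 [hs0 ss0 un]] := special_ex nb.
have Dvs : Dv a b v = a (rotN s0).1 * b (rotN (rotN s0)).1 - a (rotN (rotN s0)).1 * b (rotN s0).1.
  rewrite /Dv; case: pickP => [s /andP[/eqP hs ss]|none].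
    by rewrite (un s hs ss).
  by move: (none s0); rewrite hs0 eqxx ss0.
have [[h1 h2 n01 n02 n12] [l0 l1 l2] _ r2 S] := flags3 nb hs0 ss0 un.
have n10 : rotN s0 != s0 by rewrite eq_sym.
have n20 : rotN (rotN s0) != s0 by rewrite eq_sym.
have n21 : rotN (rotN s0) != rotN s0 by rewrite eq_sym.
have ra := div_rel nb hs0 ss0 un (Da v nb).
have rb := div_rel nb hs0 ss0 un (Db v nb).
have Ac : antisym (if white v then al else be) by case: (white v).
rewrite (eq_bigr _ (fun h hh => inner_restrict al be a b hh)).
rewrite S !S.
rewrite /univ_br hs0 h1 h2 eqxx nb /= !eqxx n01 n02 n12 n10 n20 n21 /=.
rewrite l0 l1 l2 (Ac i1 i0) (Ac i2 i0) (Ac i2 i1) ra rb Dvs.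
rewrite !intrM !intrD intrN !intrM /agg.
exact (@absK1 _ _ _ _ _ _ _ (mc_rt R) _ _ _ _ _ _ _).
Qed.

End Net.

Theorem theorem3p2 (R : realFieldType) (N : network) :
  perfect_annular N ->
  (forall al be : 'I_3 -> 'I_3 -> R, antisym al -> antisym be ->
     forall a b : nE N -> int,
       gauge_inv (wmon (R:=R) a) -> gauge_inv (wmon (R:=R) b) ->
       gauge_inv (fun w => brN al be a b * (wmon a w * wmon b w))) /\
  (forall p q : nE N -> int, Fgen p -> Fgen q ->
     exists c1 c2 : R,
       forall al be : 'I_3 -> 'I_3 -> R, antisym al -> antisym be ->
         brN al be p q = c1 * agg al + c2 * agg be).
Proof.
move=> HN; split.
  move=> al be _ _ a b Ha Hb phi w h1 h2 h3 /=.
  by rewrite (Ha phi w h1 h2 h3) (Hb phi w h1 h2 h3).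
move=> p q Fp Fq.
exists (\sum_(v | ~~ isb v && white v) (Dv p q v)%:~R),
       (\sum_(v | ~~ isb v && ~~ white v) (Dv p q v)%:~R).
move=> al be Aal Abe.
rewrite (brN_formula HN Aal Abe (fun v nb => Fgen_div HN Fp nb)
                               (fun v nb => Fgen_div HN Fq nb)).
rewrite !mulr_suml [X in _ = X + _]big_mkcond [X in _ = _ + X]big_mkcond -big_split /=.
apply: eq_bigr => v _.
by case: (isb v); case: (white v); rewrite /= ?add0r ?addr0.
Qed.
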